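(* Let $g,h\in\mathbb{R}[x]$ be polynomials of degree at least one and let $f=gh$, $n=\deg f$. Then the number of real numbers $x$ satisfying both (a) $g(x)=\pm1$ or $h(x)=\pm1$, and (b) $f(x)>1$, is at most $n$. *)

(* Defs.v *)
From mathcomp Require Import all_boot all_order all_algebra.
From mathcomp Require Import reals.
Set Implicit Arguments. Unset Strict Implicit. Unset Printing Implicit Defensive.
Import Order.TTheory GRing.Theory Num.Theory.
Local Open Scope ring_scope.

Definition special_point (R : realType) (g h : {poly R}) (x : R) : bool :=
  [|| (g.[x] == 1), (g.[x] == -1), (h.[x] == 1) | (h.[x] == -1)]
  && (1 < (g * h).[x]).

(* Main.v *)
Require Import Defs.
From mathcomp Require Import all_boot all_order all_algebra.
From mathcomp Require Import reals.
From mathcomp Require Import polyrcf polyorder.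
From mathcomp Require Import lra zify.
Set Implicit Arguments. Unset Strict Implicit. Unset Printing Implicit Defensive.
Import Order.TTheory GRing.Theory Num.Theory.
Local Open Scope ring_scope.


Definition potc (sg sh : bool) (cg ch : nat) : nat :=
 match sg, sh with
 | true, true => (((cg==0)&&(ch==0)) + ~~((3<=cg)&&(3<=ch)))%N
 | false,false => (((cg==4)&&(ch==4)) + ~~((cg<=1)&&(ch<=1)))%N
 | true,false => maxn ((ch==4)*(1 + (cg<=2))) ((cg==0)*(1+(2<=ch)))
 | false,true => maxn ((cg==4)*(1+(ch<=2))) ((ch==0)*(1+(2<=cg)))
 end.

Definition spc (cg ch : nat) : bool :=
  [|| (cg==3)&&(ch==4), (cg==1)&&(ch==0), (ch==3)&&(cg==4) | (ch==1)&&(cg==0)].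

Definition relc (s : bool) (a c : nat) : bool :=
  if s then (a <= c)%N && ((a==c) ==> ~~odd a) else (c <= a)%N && ((a==c) ==> ~~odd a).

Definition I5 := iota 0 5.
Definition B2 := [:: true; false].

Lemma potc_dec_all : all (fun sg => all (fun sh => all (fun a => all (fun b => all (fun c => all (fun d =>
  relc sg a c ==> relc sh b d ==> (potc sg sh c d + spc c d <= potc sg sh a b)%N) I5) I5) I5) I5) B2) B2.
Proof. by vm_compute. Qed.

Lemma potc_dec sg sh a b c d : (a <= 4)%N -> (b <= 4)%N -> (c <= 4)%N -> (d <= 4)%N ->
  relc sg a c -> relc sh b d -> (potc sg sh c d + spc c d <= potc sg sh a b)%N.
Proof.
have I5P x : (x <= 4)%N -> x \in I5 by rewrite mem_iota.
move=> /I5P ha /I5P hb /I5P hc /I5P hd.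
have hsg : sg \in B2 by case: sg.
have hsh : sh \in B2 by case: sh.
move: potc_dec_all => /allP/(_ _ hsg)/allP/(_ _ hsh)/allP/(_ _ ha)/allP/(_ _ hb)/allP/(_ _ hc)/allP/(_ _ hd).
by move=> /implyP H /H /implyP H2 /H2.
Qed.

Lemma potc_jump_all : all (fun sg => all (fun sh => all (fun sg' => all (fun sh' => all (fun c => all (fun d =>
  (potc sg' sh' c d <= potc sg sh c d + (sg != sg') + (sh != sh'))%N) I5) I5) B2) B2) B2) B2.
Proof. by vm_compute. Qed.

Lemma potc_jump sg sh sg' sh' c d : (c <= 4)%N -> (d <= 4)%N ->
  (potc sg' sh' c d <= potc sg sh c d + (sg != sg') + (sh != sh'))%N.
Proof.
have I5P x : (x <= 4)%N -> x \in I5 by rewrite mem_iota.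
move=> /I5P hc /I5P hd.
have B2P (b : bool) : b \in B2 by case: b.
by move: potc_jump_all => /allP/(_ _ (B2P sg))/allP/(_ _ (B2P sh))/allP/(_ _ (B2P sg'))/allP/(_ _ (B2P sh'))/allP/(_ _ hc)/allP/(_ _ hd).
Qed.

Lemma potc_le2_all : all (fun sg => all (fun sh => all (fun c => all (fun d =>
  (potc sg sh c d <= 2)%N) I5) I5) B2) B2.
Proof. by vm_compute. Qed.

Lemma potc_le2 sg sh c d : (c <= 4)%N -> (d <= 4)%N -> (potc sg sh c d <= 2)%N.
Proof.
have I5P x : (x <= 4)%N -> x \in I5 by rewrite mem_iota.
move=> /I5P hc /I5P hd.
have B2P (b : bool) : b \in B2 by case: b.
by move: potc_le2_all => /allP/(_ _ (B2P sg))/allP/(_ _ (B2P sh))/allP/(_ _ hc)/allP/(_ _ hd).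
Qed.

Definition cls (R : realDomainType) (x : R) : nat :=
  if x < -1 then 0%N else if x == -1 then 1%N else if x < 1 then 2%N
  else if x == 1 then 3%N else 4%N.

Lemma cls_le4 (R : realDomainType) (x : R) : (cls x <= 4)%N.
Proof. by rewrite /cls; do !case: ifP. Qed.

Lemma cls_lt (R : realFieldType) (x y : R) : x < y ->
  (cls x <= cls y)%N && ((cls x == cls y) ==> ~~ odd (cls x)).
Proof.
move=> xy; rewrite /cls.
have [h1|h1] := ltrP x (-1); have [h2|h2] := ltrP y (-1);
have [e1|e1] := eqVneq x (-1); have [e2|e2] := eqVneq y (-1);
have [h3|h3] := ltrP x 1; have [h4|h4] := ltrP y 1;
have [e3|e3] := eqVneq x 1; have [e4|e4] := eqVneq y 1 => //;
 try (exfalso; lra).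
Qed.

Lemma relc_lt (R : realFieldType) (s : bool) (x y : R) :
  (if s then x < y else y < x) -> relc s (cls x) (cls y).
Proof.
case: s => /= /cls_lt /andP[h1 h2]; rewrite /relc h1 //=.
by rewrite eq_sym in h2; case: eqP h2 => // -> .
Qed.

Lemma spc_cls (R : realFieldType) (a b : R) :
  spc (cls a) (cls b) = [|| (a == 1), (a == -1), (b == 1) | (b == -1)] && (1 < a * b).
Proof.
rewrite /spc /cls.
have [h1|h1] := ltrP a (-1); have [h2|h2] := ltrP b (-1);
have [e1|e1] := eqVneq a (-1); have [e2|e2] := eqVneq b (-1);
have [h3|h3] := ltrP a 1; have [h4|h4] := ltrP b 1;
have [e3|e3] := eqVneq a 1; have [e4|e4] := eqVneq b 1 => //=;
 try (exfalso; lra); try subst;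
 rewrite ?mul1r ?mulr1 ?mulN1r ?mulrN1 ?andbF ?andbT ?orbT ?orbF ?eqxx //=;
 first [done | (apply/esym/idP; lra) | (apply/esym/negbTE; rewrite -leNgt; lra) | idtac].
Qed.

Lemma ivt_open (R : rcfType) (q : {poly R}) l r : l < r -> q.[l] < 0 -> 0 < q.[r] ->
  exists t, (l < t < r) && (q.[t] == 0).
Proof.
move=> lr ql qr.
have [x /andP[lx xr] /rootP qx] := @poly_ivt R q l r (ltW lr) ltac:(by rewrite (ltW ql) (ltW qr)).
exists x; rewrite qx eqxx andbT.
have xl : x != l by apply/eqP => E; move: ql; rewrite -E qx; lra.
have xr' : x != r by apply/eqP => E; move: qr; rewrite -E qx; lra.
by rewrite !lt_neqAle lx xr eq_sym xl xr'.
Qed.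

Lemma sign_const (R : rcfType) (p : {poly R}) l r : l < r -> p.[l] != 0 -> p.[r] != 0 ->
  (forall t, l < t < r -> p.[t] != 0) -> (0 < p.[l]) = (0 < p.[r]).
Proof.
move=> lr pl pr H.
have [hl|hl] := ltrP 0 p.[l]; have [hr|hr] := ltrP 0 p.[r] => //.
- have hr' : p.[r] < 0 by rewrite lt_neqAle pr hr.
  have [t /andP[tt /eqP]] := @ivt_open R (- p) l r lr
      ltac:(rewrite hornerN; lra) ltac:(rewrite hornerN; lra).
  by rewrite hornerN => /eqP; rewrite oppr_eq0 (negbTE (H t tt)).
- have hl' : p.[l] < 0 by rewrite lt_neqAle pl hl.
  have [t /andP[tt /eqP pt]] := @ivt_open R p l r lr hl' hr.
  by move: (H t tt); rewrite pt eqxx.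
Qed.

Lemma mono (R : rcfType) (p : {poly R}) l r t t1 t2 : l <= t <= r -> p^`().[t] != 0 ->
  (forall x, l < x < r -> p^`().[x] != 0) -> l <= t1 -> t1 < t2 -> t2 <= r ->
  (if 0 < p^`().[t] then p.[t1] < p.[t2] else p.[t2] < p.[t1]).
Proof.
move=> /andP[lt tr] pt H lt1 t12 t2r.
have [c] := poly_mvt p t12; rewrite in_itv /= => /andP[c1 c2] E.
have cin : l < c < r by apply/andP; split; lra.
have pc := H c cin.
have sc : (0 < p^`().[c]) = (0 < p^`().[t]).
  have [ct|ct|ct] := ltrgtP c t.
  - apply: sign_const => // x /andP[x1 x2]; apply: H; apply/andP; split; lra.
  - apply/esym; apply: sign_const => // x /andP[x1 x2]; apply: H; apply/andP; split; lra.
  - by rewrite ct.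
rewrite -sc.
have d0 : 0 < t2 - t1 by lra.
have [hc|hc] := ltrP 0 p^`().[c].
- have : 0 < p^`().[c] * (t2 - t1) by apply: mulr_gt0.
  rewrite -E; lra.
- have hc' : p^`().[c] < 0 by rewrite lt_neqAle pc hc.
  have : p^`().[c] * (t2 - t1) < 0 by rewrite pmulr_llt0.
  rewrite -E; lra.
Qed.

Definition Pt (R : rcfType) (g h : {poly R}) (t x : R) : nat :=
  potc (0 < g^`().[t]) (0 < h^`().[t]) (cls g.[x]) (cls h.[x]).
Definition Sp (R : rcfType) (g h : {poly R}) (x : R) : bool := spc (cls g.[x]) (cls h.[x]).
Definition cnt (R : rcfType) (s : seq R) (p q : R) : nat := count (fun x => (p < x) && (x <= q)) s.

Definition region (R : rcfType) (g h : {poly R}) l r t :=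
  [/\ l <= t <= r, g^`().[t] != 0, h^`().[t] != 0 &
   forall x, l < x < r -> (g^`().[x] != 0) && (h^`().[x] != 0)].

Lemma pw (R : rcfType) (g h : {poly R}) l r t p q : region g h l r t ->
  l <= p -> p < q -> q <= r -> (Pt g h t q + Sp g h q <= Pt g h t p)%N.
Proof.
case=> ht gt ht' H lp pq qr.
have Hg : forall x, l < x < r -> g^`().[x] != 0 by move=> x /H /andP[].
have Hh : forall x, l < x < r -> h^`().[x] != 0 by move=> x /H /andP[].
have mg := mono ht gt Hg lp pq qr.
have mh := mono ht ht' Hh lp pq qr.
rewrite /Pt /Sp; apply: potc_dec; rewrite ?cls_le4 //; exact: relc_lt.
Qed.

Lemma cnt_split (R : rcfType) (s : seq R) p m q : p <= m -> m <= q ->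
  cnt s p q = (cnt s p m + cnt s m q)%N.
Proof.
move=> pm mq; rewrite /cnt -count_predUI.
have -> : count (predI (fun x => (p < x) && (x <= m)) (fun x => (m < x) && (x <= q))) s = 0%N.
  by apply/eqP; rewrite -leqn0 leqNgt -has_count; apply/hasPn => x _ /=; apply/negP => /andP[/andP[_ a] /andP[b _]]; lra.
rewrite addn0; apply: eq_count => x /=.
have [h1|h1] := ltrP p x; have [h2|h2] := lerP x q; have [h3|h3] := ltrP m x; have [h4|h4] := lerP x m => //=; lra.
Qed.

Lemma nat_l1 a1 a2 P0 P1 P2 : (a1 + P1 + 1 <= P0)%N -> (a2 + P2 <= P1)%N -> (1 + (a1 + a2) + P2 <= P0)%N.
Proof. lia. Qed.
Lemma nat_l2 a1 a2 P0 P1 P2 : (a1 + P1 + 1 <= P0)%N -> (a2 + P2 + 1 <= P1)%N -> (1 + (a1 + a2) + P2 + 1 <= P0)%N.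
Proof. lia. Qed.

Lemma piece (R : rcfType) (g h : {poly R}) l r t (s : seq R) : region g h l r t ->
  uniq s -> all (Sp g h) s -> forall p q, l <= p -> p < q -> q <= r ->
  (cnt s p q + Pt g h t q <= Pt g h t p)%N /\
  (Sp g h q -> q \notin s -> (cnt s p q + Pt g h t q + 1 <= Pt g h t p)%N).
Proof.
move=> reg; elim: s => [|x s IH] /=.
  move=> _ _ p q lp pq qr; have H := pw reg lp pq qr; rewrite /cnt /=.
  split=> [|hs _]; move: H; rewrite ?hs /= ?add0n ?addn0 //.
  by apply: leq_trans; rewrite leq_addr.
move=> /andP[xs us] /andP[spx sps] p q lp pq qr.
have [xin|xout] := boolP ((p < x) && (x <= q)); last first.
  have [IH1 IH2] := IH us sps p q lp pq qr.
  rewrite /cnt /= add0n; split=> // sq; rewrite in_cons negb_or => /andP[_ qs].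
  exact: IH2.
move: (xin) => /andP[px xq].
have [xeq|xlt] := eqVneq x q.
  subst x; have [IH1 IH2] := IH us sps p q lp pq qr.
  rewrite /cnt /= ?px ?lexx /=; split; last by rewrite in_cons eqxx.
  have := IH2 spx xs; rewrite /cnt => H; apply: leq_trans H; by rewrite add1n -addn1 addnAC.
have xq' : x < q by rewrite lt_neqAle xlt xq.
have [_ A2] := IH us sps p x lp px ltac:(lra).
have [B1 B2] := IH us sps x q ltac:(lra) xq' qr.
have A := A2 spx xs.
rewrite /cnt /= ?xin add1n -/(cnt s p q).
have E := @cnt_split R s p x q (ltW px) xq.
rewrite E; split.
  exact: nat_l1 A B1.
move=> sq; rewrite in_cons negb_or => /andP[_ qs].
exact: nat_l2 A (B2 sq qs).
Qed.

Lemma seq_min (R : realDomainType) (L : seq R) : L != [::] ->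
  exists2 c, c \in L & forall x, x \in L -> c <= x.
Proof.
elim: L => [//|a L IH] _.
have [->|nL] := eqVneq L [::].
  by exists a; rewrite ?inE // => x; rewrite inE => /eqP ->.
have [c cL cmin] := IH nL.
have [ac|ca] := lerP a c.
  exists a; first by rewrite inE eqxx.
  move=> x; rewrite inE => /orP[/eqP->//|/cmin]; exact: le_trans.
exists c; first by rewrite inE cL orbT.
move=> x; rewrite inE => /orP[/eqP->|/cmin//]; exact: ltW.
Qed.

Lemma in_rootsR (R : rcfType) (p : {poly R}) x : p != 0 -> (x \in rootsR p) = root p x.
Proof. by move=> p0; rewrite -(roots_on_rootsR p0 x). Qed.

Definition crc (R : rcfType) (rs : seq R) (y z : R) := count (fun x => (y < x) && (x < z)) rs.

Lemma nat_l4 (a b c d k : nat) : (0 < a + c)%N -> (a + b + (c + d) <= k.+1)%N -> (b + d <= k)%N.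
Proof. lia. Qed.

Lemma nat_l3 a1 a2 a3 P0 P1 P2 P3 P4 e c2 :
  (a1 + P1 <= P0)%N -> (a2 + P2 <= P3)%N -> (P3 <= P1 + e)%N ->
  (a3 + P4 <= P2 + c2)%N -> (a1 + a2 + a3 + P4 <= P0 + (e + c2))%N.
Proof. lia. Qed.

Lemma empty_case (R : rcfType) (g h : {poly R}) (s : seq R) y z :
  uniq s -> all (Sp g h) s -> y < z -> g^`().[y] != 0 -> h^`().[y] != 0 ->
  g^`().[z] != 0 -> h^`().[z] != 0 ->
  (forall x, y < x < z -> (g^`().[x] != 0) && (h^`().[x] != 0)) ->
  (cnt s y z + Pt g h z z <= Pt g h y y)%N.
Proof.
move=> us sps yz gy hy gz hz H.
have reg : region g h y z y by split; rewrite ?lexx ?(ltW yz).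
have [P1 _] := piece reg us sps (lexx y) yz (lexx z).
suff -> : Pt g h z z = Pt g h y z by [].
rewrite /Pt.
have -> : (0 < g^`().[z]) = (0 < g^`().[y]).
  by apply/esym/sign_const => // x /H /andP[].
have -> // : (0 < h^`().[z]) = (0 < h^`().[y]).
by apply/esym/sign_const => // x /H /andP[].
Qed.

Lemma sweep (R : rcfType) (g h : {poly R}) (s : seq R) :
  g^`() != 0 -> h^`() != 0 -> uniq s -> all (Sp g h) s ->
  forall k y z, y < z -> g^`().[y] != 0 -> h^`().[y] != 0 ->
   g^`().[z] != 0 -> h^`().[z] != 0 ->
   (crc (rootsR g^`()) y z + crc (rootsR h^`()) y z <= k)%N ->
   (cnt s y z + Pt g h z z <= Pt g h y y + (crc (rootsR g^`()) y z + crc (rootsR h^`()) y z))%N.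
Proof.
move=> Dg0 Dh0 us sps.
set rg := rootsR g^`(); set rh := rootsR h^`().
have rgP x : (x \in rg) = root g^`() x by exact: in_rootsR.
have rhP x : (x \in rh) = root h^`() x by exact: in_rootsR.
have urg : uniq rg by exact: uniq_roots.
have urh : uniq rh by exact: uniq_roots.
elim=> [|k IH] y z yz gy hy gz hz hk;
  set L := [seq x <- rg ++ rh | (y < x) && (x < z)].
- have [L0|LN] := eqVneq L [::].
  + apply: leq_trans (empty_case us sps yz gy hy gz hz _) (leq_addr _ _) => x xin.
    apply/andP; split; apply/negP => rt;
    (have : x \in L by rewrite mem_filter xin mem_cat rgP rhP !rootE rt ?orbT);
    by rewrite L0.
  + exfalso; move: hk; rewrite leqn0 addn_eq0 /crc => /andP[/eqP c1 /eqP c2].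
    move: LN; rewrite /L filter_cat -size_eq0 size_cat !size_filter c1 c2.
    by [].
- have [L0|LN] := eqVneq L [::].
  + apply: leq_trans (empty_case us sps yz gy hy gz hz _) (leq_addr _ _) => x xin.
    apply/andP; split; apply/negP => rt;
    (have : x \in L by rewrite mem_filter xin mem_cat rgP rhP !rootE rt ?orbT);
    by rewrite L0.
  have [c cL cmin] := seq_min LN.
  move: (cL); rewrite mem_filter => /andP[/andP[yc cz] crr].
  set L2 := z :: [seq x <- rg ++ rh | (c < x) && (x < z)].
  have [c' c'L c'min] := @seq_min R L2 isT.
  have cc' : c < c'.
    by move: c'L; rewrite inE mem_filter => /orP[/eqP->//|/andP[/andP[]]].
  have c'z : c' <= z by apply: c'min; rewrite inE eqxx.
  set w := (c + c') / 2.
  have cw : c < w by rewrite /w; lra.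
  have wc' : w < c' by rewrite /w; lra.
  have F1 x : y < x < c -> (g^`().[x] != 0) && (h^`().[x] != 0).
    move=> /andP[yx xc]; apply/andP; split; apply/negP => rt;
    (have : x \in L by rewrite mem_filter yx /= (lt_trans xc cz) mem_cat rgP rhP !rootE rt ?orbT);
    by move/cmin; lra.
  have F2 x : c < x < c' -> (g^`().[x] != 0) && (h^`().[x] != 0).
    move=> /andP[cx xc']; apply/andP; split; apply/negP => rt;
    (have : x \in L2 by rewrite inE mem_filter cx /= (lt_le_trans xc' c'z) mem_cat rgP rhP !rootE rt ?orbT);
    by move/c'min; lra.
  have /andP[gw hw] := F2 w ltac:(by rewrite cw wc').
  have wz : w < z by lra.
  have reg1 : region g h y c y.
    by split; rewrite ?lexx ?(ltW yc).
  have reg2 : region g h c w w.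
    split; rewrite ?lexx ?(ltW cw) // => x /andP[cx xw]; apply: F2; rewrite cx /=; lra.
  have [P1 _] := piece reg1 us sps (lexx y) yc (lexx c).
  have [P2 _] := piece reg2 us sps (lexx c) cw (lexx w).
  have noroot_yw x : y < x < w -> x != c ->
      (g^`().[x] != 0) && (h^`().[x] != 0).
    move=> /andP[yx xw] xc; have [xlc|xgc] := ltrP x c.
      by apply: F1; rewrite yx xlc.
    by apply: F2; rewrite (lt_neqAle c x) eq_sym xc xgc /=; lra.
  have yw : y < w by lra.
  have sg_eq : ~~ root g^`() c -> (0 < g^`().[y]) = (0 < g^`().[w]).
    move=> nr; apply: sign_const => // x xin.
    have [xc|xc] := eqVneq x c; first by rewrite xc.
    by have /andP[] := noroot_yw x xin xc.
  have sh_eq : ~~ root h^`() c -> (0 < h^`().[y]) = (0 < h^`().[w]).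
    move=> nr; apply: sign_const => // x xin.
    have [xc|xc] := eqVneq x c; first by rewrite xc.
    by have /andP[] := noroot_yw x xin xc.
  have J : (Pt g h w c <= Pt g h y c + (root g^`() c + root h^`() c))%N.
    rewrite /Pt; apply: leq_trans (potc_jump (0 < g^`().[y]) (0 < h^`().[y]) _ _ (cls_le4 _) (cls_le4 _)) _.
    rewrite -addnA leq_add2l; apply: leq_add.
      by case: (boolP (root g^`() c)) => [_|/sg_eq ->]; rewrite ?leq_b1 ?eqxx.
    by case: (boolP (root h^`() c)) => [_|/sh_eq ->]; rewrite ?leq_b1 ?eqxx.
  have dec (p : {poly R}) (rp : seq R) : (forall x, (x \in rp) = root p x) -> uniq rp ->
      (forall x, y < x < z -> x != c -> root p x -> c' <= x) ->
      crc rp y z = (root p c + crc rp w z)%N.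
    move=> rpP urp Hp; rewrite /crc -rpP -(count_uniq_mem c urp).
    rewrite -count_predUI.
    have -> : count (predI (pred1 c) (fun x => (w < x) && (x < z))) rp = 0%N.
      apply/eqP; rewrite -leqn0 leqNgt -has_count; apply/hasPn => x _ /=.
      by apply/negP => /andP[/eqP -> /andP[]]; lra.
    rewrite addn0; apply: eq_in_count => x xr /=.
    have [->|xc] := eqVneq x c; first by rewrite yc cz.
    rewrite /=; apply/idP/idP => /andP[h1 h2].
      have := Hp x ltac:(by rewrite h1 h2) xc ltac:(by rewrite -rpP).
      by move=> hx; rewrite h2 andbT; lra.
    by rewrite h2 andbT; lra.
  have HL x : y < x < z -> x != c -> (root g^`() x || root h^`() x) -> c' <= x.
    move=> /andP[yx xz] xc rt; apply: c'min; rewrite inE mem_filter mem_cat rgP rhP rt xz !andbT.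
    apply/orP; right; have [//|xlc] := ltrP c x.
    have xlc' : x < c by rewrite lt_neqAle xc xlc.
    by have := F1 x ltac:(by rewrite yx xlc'); rewrite !rootE in rt; case/orP: rt => /eqP -> ; rewrite ?eqxx ?andbF.
  have Dg := dec g^`() rg rgP urg (fun x a b r => HL x a b ltac:(by rewrite r)).
  have Dh := dec h^`() rh rhP urh (fun x a b r => HL x a b ltac:(by rewrite r orbT)).
  have crc_c : (0 < root g^`() c + root h^`() c)%N.
    by move: crr; rewrite mem_cat rgP rhP; case: (root _ c); case: (root _ c).
  have hk' : (crc rg w z + crc rh w z <= k)%N.
    by move: hk; rewrite Dg Dh; apply: nat_l4.
  have IHw := IH w z wz gw hw gz hz hk'.
  rewrite (cnt_split s (ltW yc) (ltW (lt_trans cw wz))) (cnt_split s (ltW cw) (ltW wz)).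
  rewrite Dg Dh.
  have -> : (root g^`() c + crc rg w z + (root h^`() c + crc rh w z) =
            (root g^`() c + root h^`() c) + (crc rg w z + crc rh w z))%N.
    by rewrite addnACA.
  rewrite addnA; exact: nat_l3 P1 P2 J IHw.
Qed.

Lemma le_sum_abs (R : realDomainType) (l : seq R) x : x \in l -> `|x| <= \sum_(i <- l) `|i|.
Proof.
elim: l => [//|a l IH]; rewrite inE big_cons => /orP[/eqP->|/IH H].
  by rewrite lerDl sumr_ge0.
by apply: le_trans H _; rewrite lerDr.
Qed.

Lemma nat_fin sz sg sh cg ch P0 P1 :
  (1 < sg)%N -> (1 < sh)%N -> (cg < sg.-1)%N -> (ch < sh.-1)%N -> (P0 <= 2)%N ->
  (sz + P1 <= P0 + (cg + ch))%N -> (sz <= (sg + sh).-1.-1)%N.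
Proof. lia. Qed.

Lemma nat_pd n : (1 < n)%N -> (0 < n.-1)%N.
Proof. lia. Qed.

Theorem mainR (R : rcfType) (g h : {poly R}) :
  (1 < size g)%N -> (1 < size h)%N ->
  forall s : seq R, uniq s -> all (Sp g h) s ->
  (size s <= (size (g * h)%R).-1)%N.
Proof.
move=> sg sh s us sps.
have g0 : g != 0 by rewrite -size_poly_gt0 (ltnW sg).
have h0 : h != 0 by rewrite -size_poly_gt0 (ltnW sh).
have Dg0 : g^`() != 0 by rewrite -size_poly_gt0 size_deriv nat_pd.
have Dh0 : h^`() != 0 by rewrite -size_poly_gt0 size_deriv nat_pd.
set rg := rootsR g^`(); set rh := rootsR h^`().
have rgP x : (x \in rg) = root g^`() x by exact: in_rootsR.
have rhP x : (x \in rh) = root h^`() x by exact: in_rootsR.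
set M := \sum_(i <- s ++ rg ++ rh) `|i|.
have HM x : x \in s ++ rg ++ rh -> - (M + 1) < x < M + 1.
  move=> /le_sum_abs; rewrite -/M ler_norml => /andP[h1 h2].
  apply/andP; split; lra.
have M0 : 0 <= M by apply: sumr_ge0.
set y0 := - (M + 1); set z0 := M + 1.
have y0z0 : y0 < z0 by rewrite /y0 /z0; lra.
have notin x : x \in s ++ rg ++ rh -> (x != y0) && (x != z0).
  move=> /HM /andP[h1 h2]; apply/andP; split; apply/eqP => E; rewrite E /y0 /z0 in h1 h2; lra.
have nz (p : {poly R}) (rp : seq R) x : (forall t, (t \in rp) = root p t) ->
    {subset rp <= s ++ rg ++ rh} -> (x == y0) || (x == z0) -> p.[x] != 0.
  move=> rpP sub xe; apply/negP => /eqP px.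
  have : x \in rp by rewrite rpP rootE px.
  move/sub/notin; case/orP: xe => /eqP ->; rewrite eqxx ?andbF //.
have subg : {subset rg <= s ++ rg ++ rh} by move=> x xr; rewrite !mem_cat xr orbT.
have subh : {subset rh <= s ++ rg ++ rh} by move=> x xr; rewrite !mem_cat xr !orbT.
have gy0 := nz _ _ y0 rgP subg ltac:(by rewrite eqxx).
have hy0 := nz _ _ y0 rhP subh ltac:(by rewrite eqxx).
have gz0 := nz _ _ z0 rgP subg ltac:(by rewrite eqxx orbT).
have hz0 := nz _ _ z0 rhP subh ltac:(by rewrite eqxx orbT).
have SW := @sweep R g h s Dg0 Dh0 us sps _ y0 z0 y0z0 gy0 hy0 gz0 hz0 (leqnn _).
have cntE : cnt s y0 z0 = size s.
  rewrite /cnt -(count_predT s); apply: eq_in_count => x xs /=.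
  have /andP[h1 h2] := HM x ltac:(by rewrite mem_cat xs).
  by apply/andP; split; rewrite /y0 /z0; lra.
rewrite cntE in SW.
have cg : (crc rg y0 z0 < (size g).-1)%N.
  apply: leq_ltn_trans (count_size _ _) _; rewrite -size_deriv.
  apply: max_poly_roots Dg0 _ (uniq_roots _ _ _); by apply/allP => x; rewrite rgP.
have ch : (crc rh y0 z0 < (size h).-1)%N.
  apply: leq_ltn_trans (count_size _ _) _; rewrite -size_deriv.
  apply: max_poly_roots Dh0 _ (uniq_roots _ _ _); by apply/allP => x; rewrite rhP.
rewrite size_mul //.
exact: nat_fin sg sh cg ch (potc_le2 _ _ (cls_le4 _) (cls_le4 _)) SW.
Qed.

Theorem mainTheorem7 (R : realType) (g h : {poly R}) :
  (1 < size g)%N -> (1 < size h)%N ->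
  forall s : seq R, uniq s -> all (special_point g h) s ->
  (size s <= (size (g * h)%R).-1)%N.
Proof.
move=> sg sh s us sps; apply: (@mainR R g h sg sh s us).
apply/allP => x xs; have := allP sps x xs.
by rewrite /special_point /Sp spc_cls hornerM.
Qed.
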